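(* Let $\Omega\subset\mathbb{R}^n$ be a bounded, connected open set with $C^1$ boundary, let $\varphi\in\Phi_w(\Omega)$ and let $u\in BD^\varphi(\Omega)$. Then $$\|Eu\|_{\varrho_{\widetilde{V}^{n\times n}_\varphi}}\le\widetilde{V}^{n\times n}_\varphi(Eu)\le 2\,\|Eu\|_{\varrho_{\widetilde{V}^{n\times n}_\varphi}}.$$
   Context: A weak $\Phi$-function on $\Omega$ ($\varphi\in\Phi_w(\Omega)$) is a function $\varphi:\Omega\times[0,\infty)\to[0,\infty]$ such that: $x\mapsto\varphi(x,|f(x)|)$ is measurable for every measurable $f$; $t\mapsto\varphi(x,t)$ is non-decreasing for every $x$; $\varphi(x,0)=\lim_{t\to0^+}\varphi(x,t)=0$ and $\lim_{t\to\infty}\varphi(x,t)=\infty$ for every $x$; there is $L\ge1$ independent of $x$ with $\varphi(x,s)/s\le L\,\varphi(x,t)/t$ for $0<s\le t$. The conjugate is $\varphi^*(x,t)=\sup_{s\ge0}(st-\varphi(x,s))$. For measurable $f$ (scalar/vector/matrix valued, $|\cdot|$ Euclidean/Frobenius norm), $\|f\|_{\varphi}=\inf\{\lambda>0:\int_\Omega\varphi(x,|f|/\lambda)dx\le1\}$ and likewise $\|f\|_{\varphi^*}$; $L^\varphi(\Omega;\mathbb{R}^n)$ is the set of measurable $f$ with $\|f\|_\varphi<\infty$. For $v\in\mathcal{M}(\Omega;\mathbb{R}^{n\times n}_{\rm sym})$: $\widetilde{V}^{n\times n}_\varphi(v)=\sup\{\int_\Omega\psi:dv:\psi\in C^1_c(\Omega;\mathbb{R}^{n\times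 n}_{\rm sym}),\|\psi\|_{\varphi^*}\le1\}$ ($A:B=\mathrm{tr}(AB^T)$), $\varrho_{\widetilde{V}^{n\times n}_\varphi}(v)=\sup\{\int_\Omega\psi:dv-\int_\Omega\varphi^*(x,|\psi|)dx:\psi\in C^1_c(\Omega;\mathbb{R}^{n\times n}_{\rm sym})\}$, and $\|v\|_{\varrho_{\widetilde{V}^{n\times n}_\varphi}}=\inf\{\lambda>0:\varrho_{\widetilde{V}^{n\times n}_\varphi}(v/\lambda)\le1\}$. $Eu=\frac12(Du+Du^T)$ is the distributional symmetric gradient and $BD^\varphi(\Omega)=\{w\in L^\varphi(\Omega;\mathbb{R}^n):\|w\|_\varphi+\widetilde{V}^{n\times n}_\varphi(Ew)<\infty\}$. *)

(* Defs.v *)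
From HB Require Import structures.
From mathcomp Require Import all_boot all_order all_algebra.
From mathcomp Require Import all_classical all_reals all_analysis.
From mathcomp Require Import measurable_realfun.
Set Implicit Arguments. Unset Strict Implicit. Unset Printing Implicit Defensive.
Import Order.TTheory GRing.Theory Num.Theory.
Import numFieldNormedType.Exports.
Local Open Scope classical_set_scope.
Local Open Scope ring_scope.

(* R^n is modelled by row vectors 'rV[R]_n; we equip it with its Borel
   sigma-algebra (generated by the open sets). *)
Section borel_rV.
Variables (R : realType) (n : nat).
Definition borel_rV : set (set 'rV[R]_n) := <<s open >>.
HB.instance Definition _ := @isMeasurable.Build (sigma_display borel_rV)
  'rV[R]_n borel_rV (@sigma_algebra0 _ setT open) (@sigma_algebraC _ open)
  (@sigma_algebra_bigcup _ setT open).
End borel_rV.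

Section defs.
Variables (R : realType) (n : nat).
Local Notation pt := 'rV[R]_n.
Local Notation mat := 'M[R]_n.

(* mu is the n-dimensional Lebesgue measure: the (Borel) measure giving
   every half-open box its volume.  This characterizes it uniquely. *)
Definition is_lebesgue_rV (mu : {measure set pt -> \bar R}) : Prop :=
  forall a b : pt, (forall i, a 0 i <= b 0 i) ->
    mu [set x | forall i, a 0 i < x 0 i <= b 0 i] =
    (\prod_(i < n) (b 0 i - a 0 i))%:E.

Definition frob (p q : nat) (A : 'M[R]_(p, q)) : R :=
  Num.sqrt (\sum_(i < p) \sum_(j < q) A i j ^+ 2).

Definition evec (j : 'I_n) : pt := delta_mx 0 j.

Definition C1fun (g : pt -> R) : Prop :=
  continuous g /\
  forall j : 'I_n, (forall x, derivable g x (evec j)) /\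
                   continuous (fun x => 'D_(evec j) g x).

Definition C1c_sym (Omega : set pt) (psi : pt -> mat) : Prop :=
  [/\ forall x, (psi x)^T = psi x,
      forall i j, C1fun (fun x => psi x i j),
      compact (closure [set x | psi x != 0]) &
      closure [set x | psi x != 0] `<=` Omega].

(* C^1 boundary: near each boundary point, after a rigid motion, Omega is the
   region below the graph of a C^1 function of the remaining n-1 coordinates
   (that function is encoded as a C^1 function of the whole vector with the
   k-th coordinate set to 0). *)
Definition C1_boundary (Omega : set pt) : Prop :=
  forall x0, closure Omega x0 -> ~ Omega x0 ->
  exists (Q : mat) (k : 'I_n) (r : R) (g : pt -> R),
    [/\ Q *m Q^T = 1%:M, 0 < r, C1fun g &
        forall x, ball x0 r x ->
          (Omega x <->
           let y := (x - x0) *m Q in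
           y 0 k < g (\row_j (if j == k then 0 else y 0 j)))].

Definition weak_Phi (Omega : set pt) (phi : pt -> R -> \bar R) : Prop :=
  [/\ forall f : pt -> R, measurable_fun Omega f ->
        measurable_fun Omega ((fun x => phi x `|f x|) : pt -> \bar R),
      forall x, Omega x ->
        (forall t, 0 <= t -> (0 <= phi x t)%E) /\
        (forall s t, 0 <= s -> s <= t -> (phi x s <= phi x t)%E),
      forall x, Omega x -> phi x 0 = 0%E /\ phi x t @[t --> 0^'+] --> 0%E,
      forall x, Omega x -> phi x t @[t --> +oo] --> +oo%E &
      exists L : R, 1 <= L /\
        forall x, Omega x -> forall s t, 0 < s -> s <= t ->
          (phi x s * (s^-1)%:E <= L%:E * (phi x t * (t^-1)%:E))%E].

Definition conjugate (phi : pt -> R -> \bar R) : pt -> R -> \bar R :=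
  fun x t => ereal_sup [set ((s * t)%:E - phi x s)%E | s in [set s | 0 <= s]].

Variable mu : {measure set pt -> \bar R}.

(* Luxemburg norm of a nonnegative function g (g = |f|) on Omega *)
Definition lux (Omega : set pt) (phi : pt -> R -> \bar R) (g : pt -> R) : \bar R :=
  ereal_inf [set lam%:E | lam in
    [set lam : R | 0 < lam /\
       (\int[mu]_(x in Omega) phi x (g x / lam)%R <= 1)%E]].

(* the action  psi |-> \int_Omega psi : dEu  of the symmetric gradient,
   written distributionally:  - \int_Omega sum_{i,j} u_i d_j psi_ij dx *)
Definition symgrad (Omega : set pt) (u : pt -> pt) (psi : pt -> mat) : \bar R :=
  (\int[mu]_(x in Omega)
     (- \sum_(i < n) \sum_(j < n) u x 0 i * 'D_(evec j) (fun y => psi y i j) x)%R%:E)%E.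

(* For a linear functional v on test fields (a matrix-valued measure acting
   by psi |-> \int psi : dv): *)
Definition Vtilde (Omega : set pt) (phi : pt -> R -> \bar R)
    (v : (pt -> mat) -> \bar R) : \bar R :=
  ereal_sup [set v psi | psi in
    [set psi | C1c_sym Omega psi /\
       (lux Omega (conjugate phi) (fun x => frob (psi x)) <= 1)%E]].

Definition rhoV (Omega : set pt) (phi : pt -> R -> \bar R)
    (v : (pt -> mat) -> \bar R) : \bar R :=
  ereal_sup [set (v psi - \int[mu]_(x in Omega) conjugate phi x (frob (psi x)))%E
            | psi in C1c_sym Omega].

Definition rhoV_norm (Omega : set pt) (phi : pt -> R -> \bar R)
    (v : (pt -> mat) -> \bar R) : \bar R :=
  ereal_inf [set lam%:E | lam in
    [set lam : R | 0 < lam /\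
       (rhoV Omega phi (fun psi => (lam^-1)%:E * v psi) <= 1)%E]].

(* u in L^1_loc(Omega) (so that Eu is a distribution) *)
Definition loc_integrable (Omega : set pt) (u : pt -> pt) : Prop :=
  forall K, compact K -> K `<=` Omega ->
    mu.-integrable K (fun x => (frob (u x))%:E).

(* Eu is a (R^{n x n}_sym-valued Radon) measure on Omega: on each compact
   K of Omega the distribution is of order 0. *)
Definition symgrad_is_measure (Omega : set pt) (u : pt -> pt) : Prop :=
  forall K, compact K -> K `<=` Omega ->
  exists C : R, forall (psi : pt -> mat) (M : R),
    C1c_sym Omega psi -> closure [set x | psi x != 0] `<=` K ->
    (forall x, frob (psi x) <= M) ->
    (`| symgrad Omega u psi | <= (C * M)%:E)%E.

Definition BDphi (Omega : set pt) (phi : pt -> R -> \bar R) (u : pt -> pt) : Prop :=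
  [/\ measurable_fun Omega u,
      loc_integrable Omega u,
      symgrad_is_measure Omega u,
      (lux Omega phi (fun x => frob (u x)) < +oo)%E &
      (Vtilde Omega phi (symgrad Omega u) < +oo)%E].

End defs.

(* Main.v *)
Require Import Defs.
From HB Require Import structures.
From mathcomp Require Import all_boot all_order all_algebra.
From mathcomp Require Import all_classical all_reals all_analysis.
From mathcomp Require Import measurable_realfun.
Import Order.TTheory GRing.Theory Num.Theory.
Import numFieldNormedType.Exports.
Local Open Scope classical_set_scope.
Local Open Scope ring_scope.

Import HBNNSimple.
Section integral_aux.
Local Open Scope ereal_scope.
Context d (T : measurableType d) (R : realType).
Variable mu : {measure set T -> \bar R}.

Definition nnI (f : T -> \bar R) := ereal_sup [set sintegral mu h |
  h in [set h : {nnsfun T >-> R} | forall x, (h x)%:E <= f x]].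

Lemma integralE D f : \int[mu]_(x in D) f x =
  nnI ((f \_ D)^\+) - nnI ((f \_ D)^\-).
Proof. by []. Qed.

Lemma nnI_genZ (k : R) f : (0 < k)%R -> k%:E * nnI f <= nnI (fun x => k%:E * f x).
Proof.
move=> k0; rewrite -lee_pdivlMl//; apply: ge_ereal_sup => _ [h hf <-].
rewrite lee_pdivlMl// -sintegralrM; apply: ereal_sup_ubound.
exists (scale_nnsfun h (ltW k0)) => //= x.
by rewrite EFinM lee_pmul2l// ?lte_fin.
Qed.

Lemma nnIZ (k : R) f : (0 < k)%R -> nnI (fun x => k%:E * f x) = k%:E * nnI f.
Proof.
move=> k0; apply/le_anti; rewrite nnI_genZ// andbT.
rewrite -lee_pdivrMl//.
have := @nnI_genZ k^-1 (fun x => k%:E * f x) (ltac:(by rewrite invr_gt0)).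
suff -> : (fun x => k^-1%:E * (k%:E * f x)) = f by [].
by apply/funext => x; rewrite muleA -EFinM mulVf ?gt_eqF// mul1e.
Qed.

Lemma muleBpos (k : R) (a b : \bar R) : (0 < k)%R ->
  k%:E * (a - b) = k%:E * a - k%:E * b.
Proof.
move=> k0.
have ky : k%:E * +oo = +oo by rewrite gt0_muley ?lte_fin.
have kNy : k%:E * -oo = -oo by rewrite gt0_muleNy ?lte_fin.
case: a => [a||]; case: b => [b||];
  rewrite ?(EFinN, oppeK) /= ?(addeNy, addNye, addey, addye) //= ?ky ?kNy //=
  ?(addeNy, addNye, addey, addye) //=.
by rewrite -EFinD -!EFinM -EFinD mulrBr.
Qed.

Lemma integralZ_any D (k : R) (F : T -> \bar R) : (0 < k)%R ->
  \int[mu]_(x in D) (k%:E * F x) = k%:E * \int[mu]_(x in D) F x.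
Proof.
move=> k0; rewrite !integralE.
have -> : ((fun x => k%:E * F x) \_ D) = (fun x => k%:E * (F \_ D) x).
  by apply/funext => x; rewrite /patch; case: ifP; rewrite ?mule0.
by rewrite ge0_funeposM ?ltW// ge0_funenegM ?ltW// !nnIZ// muleBpos.
Qed.

Lemma nnI_le f g : (forall x, f x <= g x) -> nnI f <= nnI g.
Proof.
move=> fg; apply: ge_ereal_sup => _ [h hf <-]; apply: ereal_sup_ubound.
by exists h => // x; apply: le_trans (hf x) (fg x).
Qed.

Lemma integral_le_any D (F G : T -> \bar R) : (forall x, D x -> 0 <= F x) ->
  (forall x, D x -> F x <= G x) ->
  \int[mu]_(x in D) F x <= \int[mu]_(x in D) G x.
Proof.
move=> F0 FG; rewrite !integralE.
have EF : (F \_ D)^\- = cst 0.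
  apply/funext => x; rewrite funenegE /patch; case: ifP => xD /=.
    by apply/max_idPr; rewrite oppe_le0 F0 //; move: xD; rewrite inE.
  by rewrite oppr0 maxxx.
have EG : (G \_ D)^\- = cst 0.
  apply/funext => x; rewrite funenegE /patch; case: ifP => xD /=.
    have xD' : D x by move: xD; rewrite inE.
    by apply/max_idPr; rewrite oppe_le0 (le_trans (F0 _ xD') (FG _ xD')).
  by rewrite oppr0 maxxx.
rewrite EF EG; apply: leeB => //; apply: nnI_le => x.
rewrite !funeposE /patch; case: ifP => xD //=.
have xD' : D x by move: xD; rewrite inE.
by rewrite le_max2 // FG.
Qed.

End integral_aux.

Section aux2.
Variables (R : realType) (n : nat).
Local Notation pt := 'rV[R]_n.
Local Notation mat := 'M[R]_n.

Lemma frobZ (k : R) (A : mat) : 0 <= k -> frob (k *: A) = k * frob A.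
Proof.
move=> k0; rewrite /frob.
have -> : \sum_(i < n) \sum_(j < n) (k *: A) i j ^+ 2 =
   k ^+ 2 * \sum_(i < n) \sum_(j < n) A i j ^+ 2.
  rewrite mulr_sumr; apply: eq_bigr => i _; rewrite mulr_sumr.
  by apply: eq_bigr => j _; rewrite mxE exprMn.
by rewrite sqrtrM ?sqr_ge0 // sqrtr_sqr ger0_norm.
Qed.

Lemma entryZ (k : R) (psi : pt -> mat) i j :
  (fun y => (k *: psi y) i j) = k \*: (fun y => psi y i j).
Proof. by apply/funext => y; rewrite /= mxE. Qed.

Lemma C1funZ (k : R) (g : pt -> R) : C1fun g -> C1fun (k \*: g).
Proof.
move=> [gc gd]; split.
  by move=> x; apply: continuousZl_tmp; exact: gc.
move=> j; have [gdj gdc] := gd j; split.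
  by move=> x; apply: derivableZ.
have -> : (fun x => 'D_(evec R j) (k \*: g) x) = k \*: (fun x => 'D_(evec R j) g x).
  by apply/funext => x; rewrite deriveZ.
by move=> x; apply: continuousZl_tmp; exact: gdc.
Qed.

Lemma C1c_symZ (Omega : set pt) (psi : pt -> mat) (k : R) : k != 0 ->
  C1c_sym Omega psi -> C1c_sym Omega (fun x => k *: psi x).
Proof.
move=> k0 [s c cp sub].
have E : [set x | k *: psi x != 0] = [set x | psi x != 0].
  by apply/funext => x /=; rewrite scaler_eq0 (negbTE k0).
split; rewrite ?E //.
  by move=> x; rewrite linearZ /= s.
by move=> i j; rewrite entryZ; apply: C1funZ.
Qed.

Variable mu : {measure set pt -> \bar R}.

Lemma symgradZ (Omega : set pt) (u : pt -> pt) (psi : pt -> mat) (k : R) :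
  0 < k -> C1c_sym Omega psi ->
  symgrad mu Omega u (fun x => k *: psi x) = (k%:E * symgrad mu Omega u psi)%E.
Proof.
move=> k0 [_ c _ _]; rewrite /symgrad -integralZ_any //.
apply: eq_integral => x _; rewrite -EFinM; congr (_%:E).
rewrite mulrN mulr_sumr; congr (- _); apply: eq_bigr => i _.
rewrite mulr_sumr; apply: eq_bigr => j _.
rewrite entryZ deriveZ; last by have [_ /(_ j) [+ _]] := c i j.
by rewrite mulrCA.
Qed.


Lemma conj_ge0 (phi : pt -> R -> \bar R) x t : phi x 0 = 0%E ->
  (0 <= conjugate phi x t)%E.
Proof.
move=> p0; apply: ereal_sup_ubound; exists 0 => //=.
by rewrite mul0r p0 subee.
Qed.

Lemma conj_0 (phi : pt -> R -> \bar R) x : phi x 0 = 0%E ->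
  (forall t, 0 <= t -> (0 <= phi x t)%E) -> conjugate phi x 0 = 0%E.
Proof.
move=> p0 pge0; apply/le_anti; rewrite conj_ge0 // andbT.
apply: ge_ereal_sup => _ [s /= s0 <-].
by rewrite mulr0 sub0e oppe_le0 pge0.
Qed.

Lemma conj_scale (phi : pt -> R -> \bar R) x t c :
  (forall t, 0 <= t -> (0 <= phi x t)%E) -> 1 <= c ->
  (conjugate phi x (t / c) <= c^-1%:E * conjugate phi x t)%E.
Proof.
move=> pge0 c1; have c0 : 0 < c by apply: lt_le_trans c1.
apply: ge_ereal_sup => _ [s /= s0 <-].
apply: (@le_trans _ _ (c^-1%:E * ((s * t)%:E - phi x s))%E); last first.
  rewrite lee_pmul2l ?lte_fin ?invr_gt0 //.
  by apply: ereal_sup_ubound; exists s.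
have := pge0 s s0; case: (phi x s) => [p||] //= p0; last first.
  by rewrite addeNy gt0_muleNy ?lte_fin ?invr_gt0.
rewrite -EFinB -EFinM lee_fin mulrBr lerB //.
  by rewrite mulrA mulrC.
by rewrite ler_piMl // ?invf_le1 // -lee_fin.
Qed.

End aux2.

Theorem lemma3p12 (R : realType) (n : nat)
    (mu : {measure set 'rV[R]_n -> \bar R}) (Omega : set 'rV[R]_n)
    (phi : 'rV[R]_n -> R -> \bar R) (u : 'rV[R]_n -> 'rV[R]_n) :
  is_lebesgue_rV mu ->
  open Omega -> bounded_set Omega -> connected Omega -> C1_boundary Omega ->
  weak_Phi Omega phi ->
  BDphi mu Omega phi u ->
  (rhoV_norm mu Omega phi (symgrad mu Omega u)
     <= Vtilde mu Omega phi (symgrad mu Omega u))%E /\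
  (Vtilde mu Omega phi (symgrad mu Omega u)
     <= 2%:E * rhoV_norm mu Omega phi (symgrad mu Omega u))%E.
Proof.
move=> _ _ _ _ _ [_ Hmono H0 _ _] [_ _ _ _ VltI].
have pge0 x : Omega x -> forall t, 0 <= t -> (0 <= phi x t)%E.
  by move=> Ox; have [] := Hmono x Ox.
have p0 x : Omega x -> phi x 0 = 0%E by move=> Ox; have [] := H0 x Ox.
set v := symgrad mu Omega u.
set V := Vtilde mu Omega phi v.
have V0 : (0 <= V)%E.
  pose psi0 : 'rV[R]_n -> 'M[R]_n := fun _ => 0.
  have C0 : C1c_sym Omega psi0.
    have E : [set x | psi0 x != 0] = set0.
      by apply/seteqP; split => x //=; rewrite /psi0 eqxx.
    split; rewrite ?E ?closure0 //.
    - by move=> x; rewrite /psi0 trmx0.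
    - move=> i j; have -> : (fun x => psi0 x i j) = cst 0.
        by apply/funext => x; rewrite /psi0 mxE.
      split; first exact: cst_continuous.
      move=> k; split; first by move=> x; apply: derivable_cst.
      have -> : (fun x => 'D_(evec R k) (@cst 'rV[R]_n R 0) x) = cst 0.
        by apply/funext => x; rewrite derive_cst.
      exact: cst_continuous.
    - exact: compact0.
  have -> : 0%E = v psi0.
    rewrite /v /symgrad integral0_eq // => x _.
    rewrite big1 ?oppr0 // => i _; rewrite big1 // => j _.
    have -> : (fun y => psi0 y i j) = cst 0.
      by apply/funext => y; rewrite /psi0 mxE.
    by rewrite derive_cst mulr0.
  apply: ereal_sup_ubound; exists psi0 => //; split => //.
  apply: ereal_inf_lbound; exists 1 => //; split => //.
  rewrite integral0_eq // => x Ox.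
  have -> : frob (psi0 x) = 0.
    by rewrite /frob big1 ?sqrtr0 // => i _; rewrite big1 // => j _; rewrite mxE expr0n.
  rewrite mul0r conj_0 //; first [exact: (p0 x Ox) | exact: (pge0 x Ox)].
have Vfin : V \is a fin_num by rewrite ge0_fin_numE.
set Vr := fine V.
have VE : V = Vr%:E by rewrite fineK.
have Vr0 : 0 <= Vr by rewrite -lee_fin -VE.
split.
- rewrite VE; apply/lee_addgt0Pr => e e0.
  have l0 : 0 < Vr + e by rewrite ltr_wpDl.
  rewrite -EFinD; apply: ereal_inf_lbound; exists (Vr + e) => //; split => //.
  apply: ge_ereal_sup => _ [psi Cpsi <-].
  set m := (\int[mu]_(x in Omega) conjugate phi x (frob (psi x)))%E.
  have m0 : (0 <= m)%E.
    by apply: integral_ge0 => x Ox; apply: conj_ge0; apply: p0.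
  move: m0; case Em: m => [r||] //= r0; last first.
    by rewrite addeNy leNye.
  rewrite lee_fin in r0.
  set c := 1 + r.
  have c1 : 1 <= c by rewrite lerDl.
  have c0 : 0 < c by apply: lt_le_trans c1.
  pose psi' := fun x => c^-1 *: psi x.
  have Cpsi' : C1c_sym Omega psi'.
    by apply: C1c_symZ => //; rewrite invr_eq0 gt_eqF.
  have Hv : (v psi' <= V)%E.
    apply: ereal_sup_ubound; exists psi' => //; split => //.
    apply: ereal_inf_lbound; exists 1 => //; split => //.
    apply: (@le_trans _ _ (\int[mu]_(x in Omega) (c^-1%:E * conjugate phi x (frob (psi x))))%E).
      apply: integral_le_any => x Ox.
        by apply: conj_ge0; apply: p0.
      have ci0 : 0 <= c^-1 by rewrite invr_ge0 ltW.
      rewrite /psi' (@frobZ _ _ _ _ ci0) divr1 mulrC.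
      by apply: conj_scale => //; apply: pge0.
    rewrite integralZ_any ?invr_gt0 // -/m Em -EFinM lee_fin.
    by rewrite ler_pdivrMl // mulr1 lerDr.
  rewrite /psi' /v symgradZ ?invr_gt0 // -/v VE in Hv.
  rewrite lee_pdivrMl // in Hv.
  have H1 : ((Vr + e)^-1%:E * v psi <= c%:E)%E.
    rewrite lee_pdivrMl //; apply: (le_trans Hv).
    rewrite -!EFinM lee_fin [c * _]mulrC; apply: ler_wpM2r; first exact: ltW.
    by rewrite lerDl ltW.
  apply: (le_trans (leeB H1 (le_refl r%:E))).
  by rewrite -EFinB /c addrK.
- set N := rhoV_norm mu Omega phi v.
  suff : ((2^-1)%:E * V <= N)%E by rewrite lee_pdivrMl.
  apply: le_ereal_inf_tmp => _ [l [l0 Hrho] <-].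
  rewrite lee_pdivrMl //.
  apply: ge_ereal_sup => _ [psi [Cpsi Hlux] <-].
  have l2 : 0 < 2 * l by rewrite mulr_gt0.
  suff : ((2 * l)^-1%:E * v psi <= 1)%E by rewrite lee_pdivrMl // mule1 EFinM.
  apply: le_trans Hlux.
  apply: le_ereal_inf_tmp => _ [mu' [mu0 Hmu] <-].
  pose psi' := fun x => mu'^-1 *: psi x.
  have Cpsi' : C1c_sym Omega psi'.
    by apply: C1c_symZ => //; rewrite invr_eq0 gt_eqF.
  set b := (\int[mu]_(x in Omega) conjugate phi x (frob (psi x) / mu'))%E in Hmu.
  have Eb : (\int[mu]_(x in Omega) conjugate phi x (frob (psi' x)))%E = b.
    apply: eq_integral => x _.
    have mi0 : 0 <= mu'^-1 by rewrite invr_ge0 ltW.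
    by rewrite /psi' (@frobZ _ _ _ _ mi0) mulrC.
  have b0 : (0 <= b)%E.
    by apply: integral_ge0 => x Ox; apply: conj_ge0; apply: p0.
  have Hle := ereal_sup_ubound (ex_intro2 _ _ psi' Cpsi' erefl) : 
    (_ <= rhoV mu Omega phi (fun psi0 => ((l^-1)%:E * v psi0)%E))%E.
  have {Hle} := le_trans Hle Hrho.
  rewrite Eb /psi' /v symgradZ ?invr_gt0 // -/v.
  rewrite lee_subel_addr // => H2.
  have H3 : ((l^-1)%:E * ((mu'^-1)%:E * v psi) <= 2%:E)%E.
    apply: (le_trans H2); have -> : (2%:E : \bar R) = (1 + 1)%E by rewrite -EFinD.
    by rewrite leeD2l.
  rewrite lee_pdivrMl // lee_pdivrMl // in H3.
  rewrite lee_pdivrMl //; apply: (le_trans H3).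
  rewrite -!EFinM (_ : mu' * (l * 2) = 2 * l * mu') //.
  by rewrite mulrC [l * 2]mulrC.
Qed.
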